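(* Let $n\ge2$, $p\in(0,1)$, let $X_1,\dots,X_{n-2}$ be i.i.d. with $\mathbb P(X_i=-1)=p$, $\mathbb P(X_i=1)=1-p$, and let $W_k=\sum_{i=1}^kX_i$ for $0\le k\le n-2$. Then $$\tilde T_n^p\stackrel{d}{=}\frac n2+\max_{0\le k\le n-2}W_k-\frac{W_{n-2}}{2}.$$
   Context: For $n\ge2$, $p\in(0,1)$, $\tilde\Omega_n^p$ is the probability space of strings $\omega\in\{0,1\}^n$ with $\omega_1=0$, $\omega_n=1$ and $\omega_2,\dots,\omega_{n-1}$ independent, each $1$ with probability $p$ and $0$ with probability $1-p$. One step of the evolution replaces simultaneously every occurrence of the consecutive substring ''01'' by ''10''; $\tilde T_n^p(\omega)$ is the number of steps needed to reach a string of the form $1\cdots10\cdots0$. $\stackrel d=$ denotes equality in distribution. *)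

(* Defs.v *)
From HB Require Import structures.
From mathcomp Require Import all_boot all_order all_algebra.
Set Implicit Arguments. Unset Strict Implicit. Unset Printing Implicit Defensive.
Import Order.TTheory GRing.Theory Num.Theory.

(* One step of the evolution: simultaneously replace every "01" by "10".
   (false = 0, true = 1). Occurrences of "01" never overlap, so a
   left-to-right scan realises the simultaneous replacement. *)
Fixpoint step (s : seq bool) : seq bool :=
  match s with
  | false :: true :: r => true :: false :: step r
  | x :: r => x :: step r
  | [::] => [::]
  end.

Definition isfinal (s : seq bool) : bool :=
  s == nseq (count id s) true ++ nseq (size s - count id s) false.

Definition hits (s : seq bool) (t : nat) : bool :=
  isfinal (iter t step s) && all (fun j => ~~ isfinal (iter j step s)) (iota 0 t).

(* The string omega in Omega~_n^p built from the n-2 free middle bits b: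
   omega = 0 b_1 ... b_{n-2} 1. *)
Definition omega_of (m : nat) (b : {ffun 'I_m -> bool}) : seq bool :=
  false :: rcons [seq b i | i <- enum 'I_m] true.

Local Open Scope ring_scope.

Definition weight (R : realFieldType) (p : R) (m : nat) (b : {ffun 'I_m -> bool}) : R :=
  \prod_(i < m) (if b i then p else 1 - p).

Definition prob (R : realFieldType) (p : R) (m : nat) (E : pred {ffun 'I_m -> bool}) : R :=
  \sum_(b | E b) weight p b.

(* The random walk: X_i = -1 if b_i (probability p), X_i = 1 otherwise
   (probability 1-p), indices i = 1..m shifted to 0..m-1. *)
Definition Xstep (R : realFieldType) (m : nat) (b : {ffun 'I_m -> bool}) (i : 'I_m) : R :=
  if b i then -1 else 1.

Definition W (R : realFieldType) (m : nat) (b : {ffun 'I_m -> bool}) (k : nat) : R :=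
  \sum_(i < m | (i < k)%N) Xstep R b i.

(* max_{0 <= k <= m} W_k  (W_0 = 0, so 0 is a harmless neutral element) *)
Definition maxW (R : realFieldType) (m : nat) (b : {ffun 'I_m -> bool}) : R :=
  \big[Num.max/0]_(k < m.+1) W R b k.

Definition rhs (R : realFieldType) (n : nat) (b : {ffun 'I_(n - 2) -> bool}) : R :=
  n%:R / 2 + maxW R b - W R b (n - 2) / 2.

(* Main.v *)
Require Import Defs.
From HB Require Import structures.
From mathcomp Require Import all_boot all_order all_algebra.
From mathcomp Require Import zify.
Import Order.TTheory GRing.Theory Num.Theory.

Fixpoint Psi (z : nat) (s : seq bool) : nat :=
  match s with
  | [::] => 0
  | false :: r => Psi z.+1 r
  | true :: r => maxn (if 0 < z then z + count id r else 0) (Psi z r)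
  end.

Definition Lh (z : nat) (s : seq bool) : nat :=
  if (0 < z) && (head false s) then z + count id s - 1 else 0.

Lemma step_t r : step (true :: r) = true :: step r. Proof. by []. Qed.
Lemma step_ft r : step [:: false, true & r] = [:: true, false & step r]. Proof. by []. Qed.
Lemma step_ff r : step [:: false, false & r] = false :: step (false :: r). Proof. by []. Qed.
Lemma step_f : step [:: false] = [:: false]. Proof. by []. Qed.
Lemma step_nil : step [::] = [::]. Proof. by []. Qed.

Arguments step : simpl never.

Lemma count_step s : count id (step s) = count id s.
Proof.
move: {2}(size s) (leqnn (size s)) => k.
elim: k s => [|k IH] [|[] [|[] r]] Hs; rewrite ?step_t ?step_ft ?step_ff ?step_f ?step_nil //=;
  rewrite ?IH //=; rewrite /= in Hs. all: try lia.
Qed.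

Lemma Psi_ge z r : 0 < count id r -> 0 < z -> z + count id r <= (Psi z r).+1.
Proof.
elim: r z => [|[] r IH] z //= Hc Hz.
- rewrite Hz. case: (posnP (count id r)) => H0; first by rewrite H0; lia.
  by have := IH z H0 Hz; lia.
- have := IH z.+1 Hc isT; lia.
Qed.

Lemma Psi_0 z r : count id r = 0 -> Psi z r = 0.
Proof. elim: r z => [|[] r IH] z //= Hc; by rewrite IH. Qed.

Lemma Psi_step s z : Psi z (step s) = maxn (Lh z s) (Psi z s - 1).
Proof.
move: {2}(size s) (leqnn (size s)) => k.
elim: k s z => [|k IH] s z Hs.
  by case: s Hs => //; rewrite /Lh; case: z.
case: s Hs => [|[] r] Hs.
- by rewrite /Lh; case: z.
- rewrite step_t /= IH; last by rewrite /= in Hs; lia.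
  rewrite count_step /Lh /=.
  case: (posnP z) => [->|Hz] /=; first lia.
  rewrite ?Hz /=. case: (head false r); lia.
- case: r Hs => [|[] r] Hs.
  + by rewrite /Lh; case: z.
  + rewrite step_ft /= IH; last by rewrite /= in Hs; lia.
    rewrite count_step /Lh /=.
    case: (posnP z) => [Hz0|Hz] /=.
    * subst z. case: r Hs => [|[] r] Hs /=; first lia.
      -- lia.
      -- case: (posnP (count id r)) => H0; first by rewrite H0; lia.
         have := Psi_ge 2 r H0 isT; lia.
    * rewrite ?Hz /=. case: (head false r); lia.
  + rewrite step_ff /= IH; last by rewrite /= in Hs *; lia.
    by rewrite /Lh /= !andbF.
Qed.

Lemma Psi0_step s : Psi 0 (step s) = Psi 0 s - 1.
Proof. by rewrite Psi_step /Lh /= max0n. Qed.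

Lemma Psi0_iter j s : Psi 0 (iter j step s) = Psi 0 s - j.
Proof. elim: j => [|j IH] /=; first by rewrite subn0. rewrite Psi0_step IH; lia. Qed.

Lemma nseq_count0 r : count id r = 0 -> r = nseq (size r) false.
Proof. elim: r => [|[] r IH] //= H; by rewrite -IH. Qed.

Lemma isfinal_Psi s : isfinal s = (Psi 0 s == 0).
Proof.
elim: s => [|[] r IH] //.
- rewrite /= max0n -IH /isfinal /= add1n subSS. by rewrite eqseq_cons.
- rewrite /isfinal /= add0n.
  case: (posnP (count id r)) => H0.
  + rewrite H0 Psi_0 //= eqseq_cons eqxx /= -(@nseq_count0 r H0) eqxx //.
  + have := Psi_ge 1 r H0 isT. case: (count id r) H0 => [//|c] _ /= H.
    rewrite eqseq_cons /=. symmetry. apply: negbTE. apply/eqP. lia.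
Qed.

Lemma hits_Psi s t : hits s t = (t == Psi 0 s).
Proof.
rewrite /hits isfinal_Psi Psi0_iter.
apply/andP/eqP.
- move=> [H1 /allP H2]. rewrite subn_eq0 in H1.
  case: (ltnP (Psi 0 s) t) => H3; last by apply/eqP; rewrite eqn_leq H3 H1.
  have := H2 (Psi 0 s); rewrite mem_iota /= add0n H3 isfinal_Psi Psi0_iter subnn /=.
  by move=> /(_ isT).
- move=> ->; split; first by rewrite subnn.
  apply/allP => j; rewrite mem_iota add0n /= => Hj.
  rewrite isfinal_Psi Psi0_iter subn_eq0 -ltnNge. done.
Qed.

Fixpoint Mx (c : seq bool) : nat :=
  match c with
  | [::] => 0
  | false :: r => (Mx r).+1
  | true :: r => Mx r - 1
  end.

Lemma Psi_rcons z c : 0 < z -> Psi z (rcons c true) = z + count id c + Mx c.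
Proof.
elim: c z => [|[] c IH] z Hz /=.
- by rewrite Hz /= !addn0 maxn0.
- rewrite Hz IH // -cats1 count_cat /=. lia.
- rewrite IH //. lia.
Qed.

From mathcomp Require Import ring lra.
Local Open Scope ring_scope.

Definition Fb (R : realFieldType) (x : bool) : R := if x then -1 else 1.

Definition Ws (R : realFieldType) (c : seq bool) (k : nat) : R :=
  \sum_(0 <= i < size c) (if (i < k)%N then Fb R (nth false c i) else 0).

Lemma Ws0 (R : realFieldType) c : Ws R c 0 = 0.
Proof. by rewrite /Ws big1. Qed.

Lemma Ws_cons (R : realFieldType) x c k : Ws R (x :: c) k.+1 = Fb R x + Ws R c k.
Proof. by rewrite /Ws /= big_nat_recl. Qed.

Lemma W_Ws (R : realFieldType) m (b : {ffun 'I_m -> bool}) k :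
  W R b k = Ws R [seq b i | i <- enum 'I_m] k.
Proof.
rewrite /W /Ws big_mkcond size_map size_enum_ord big_mkord. apply: eq_bigr => i _.
rewrite (nth_map i) ?size_enum_ord // nth_ord_enum /Xstep /Fb. done.
Qed.

Lemma Ws_size (R : realFieldType) c :
  Ws R c (size c) = (count negb c)%:R - (count id c)%:R.
Proof.
elim: c => [|x c IH]; first by rewrite Ws0 subr0.
rewrite /= Ws_cons IH /Fb; case: x; rewrite /= !natrD; ring.
Qed.

Lemma Ws_le (R : realFieldType) c k : Ws R c k <= (Mx c)%:R.
Proof.
elim: c k => [|x c IH] [|k]; rewrite ?Ws0 ?ler0n //; first by rewrite /Ws big_nil.
rewrite Ws_cons /Fb; case: x => /=.
- have := IH k. case: (Mx c) => [|q] H.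
  + rewrite sub0n. lra.
  + rewrite subn1 /=. rewrite -addn1 natrD in H. lra.
- rewrite -addn1 natrD. have := IH k. lra.
Qed.

Lemma Ws_attain (R : realFieldType) c : exists2 k, (k <= size c)%N & Ws R c k = (Mx c)%:R.
Proof.
elim: c => [|x c [k Hk IH]]; first by exists 0%N => //; rewrite Ws0.
case: x => /=.
- case E: (Mx c) => [|q].
  + by exists 0%N => //; rewrite Ws0 sub0n.
  + exists k.+1 => //. rewrite Ws_cons IH E /Fb subn1 /= -addn1 natrD. ring.
- exists k.+1 => //. by rewrite Ws_cons IH /Fb -addn1 natrD addrC.
Qed.

Lemma bigmax_Ws (R : realFieldType) m c : size c = m ->
  \big[Num.max/0]_(k < m.+1) Ws R c k = (Mx c)%:R.
Proof.
move=> Hs; apply/le_anti/andP; split.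
- apply: bigmax_le; first by rewrite ler0n. by move=> i _; apply: Ws_le.
- have [k Hk <-] := Ws_attain R c.
  have Hk' : (k < m.+1)%N by rewrite ltnS -Hs.
  exact: (le_bigmax _ _ (Ordinal Hk')).
Qed.

Lemma key (R : realFieldType) (n : nat) (b : {ffun 'I_(n - 2) -> bool}) :
  (2 <= n)%N -> rhs R b = (Psi 0 (omega_of b))%:R.
Proof.
move=> Hn.
set c := [seq b i | i <- enum 'I_(n - 2)].
have Hs : size c = (n - 2)%N by rewrite size_map size_enum_ord.
rewrite /omega_of /= Psi_rcons //.
rewrite /rhs /maxW (eq_bigr (fun k : 'I_(n - 2).+1 => Ws R c k)); last by move=> k _; rewrite W_Ws.
rewrite bigmax_Ws // W_Ws -/c -Hs Ws_size.
have hn : (n%:R : R) = (count negb c)%:R + (count id c)%:R + 2.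
  have := count_predC id c. rewrite Hs => H.
  have E : count negb c = count (predC id) c by [].
  apply/eqP; rewrite -!natrD eqr_nat E; apply/eqP; lia.
rewrite hn !natrD. field; by [].
Qed.

Theorem lemma3p1 (R : realFieldType) (n : nat) (p : R) :
  (2 <= n)%N -> 0 < p -> p < 1 ->
  (forall t : nat,
     prob p (fun b : {ffun 'I_(n - 2) -> bool} => hits (omega_of b) t)
     = prob p (fun b : {ffun 'I_(n - 2) -> bool} => rhs R b == t%:R))
  /\
  (forall x : R, (forall t : nat, x != t%:R) ->
     prob p (fun b : {ffun 'I_(n - 2) -> bool} => rhs R b == x) = 0).
Proof.
move=> Hn _ _; split.
- move=> t; apply: eq_bigl => b.
  by rewrite hits_Psi (@key R n b Hn) eqr_nat eq_sym.
- move=> x Hx; rewrite /prob big_pred0 // => b.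
  by rewrite (@key R n b Hn) eq_sym; apply/negbTE.
Qed.
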